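(* Let $d\in\mathbb{N}$ and $A\subseteq\mathbb{N}_0^d$, and let $\mathcal{A}$ be the game with move set $A$. Then $\mathcal{A}$ is reflexive if and only if $$A+A=A^c\setminus T_{\mathcal{A}},$$ where $A+A=\{\boldsymbol a+\boldsymbol b:\boldsymbol a,\boldsymbol b\in A\}$ and $A^c=\mathbb{N}_0^d\setminus A$.
   Context: For $d\in\mathbb{N}$ a game is a set $\mathcal{M}\subseteq\mathbb{N}_0^d$ of moves. From position $\boldsymbol x$ a player may move to $\boldsymbol y\in\mathbb{N}_0^d$ iff $\boldsymbol x-\boldsymbol y\in\mathcal{M}$. Misère play: a player who cannot move wins. If $\boldsymbol 0\in\mathcal{M}$, $P(\mathcal{M})=\varnothing$. Otherwise: a position is an N-position if it has no option or some option is a P-position; otherwise it is a P-position; $P(\mathcal{M})$ denotes the set of P-positions. The $\star$-operator is $\mathcal{M}^\star=P(\mathcal{M})$, and $\mathcal{M}$ is reflexive if $\mathcal{M}=\mathcal{M}^\star$. The set of terminal positions of $\mathcal{M}$ is $T_{\mathcal{M}}=\{\boldsymbol x\in\mathbb{N}_0^d:\ \boldsymbol x\not\succeq\boldsymbol m\text{ for all }\boldsymbol m\in\mathcal{M}\}$, where $\preceq$ is the componentwise partial order (so $T_{\mathcal{M}}=\mathbb{N}_0^d$ if $\mathcal{M}=\varnothing$). *)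

(* Defs.v *)
From mathcomp Require Import all_boot.
Set Implicit Arguments. Unset Strict Implicit. Unset Printing Implicit Defensive.

Definition pos (d : nat) := 'I_d -> nat.

Definition ple d (m x : pos d) : Prop := forall i, m i <= x i.
Definition padd d (x y : pos d) : pos d := fun i => x i + y i.
Definition psub d (x y : pos d) : pos d := fun i => x i - y i.
Definition pzero d : pos d := fun _ => 0.
Definition psum d (x : pos d) : nat := \sum_(i < d) x i.

(* A game is a set of moves M ⊆ N_0^d. From x one may move to y iff x - y ∈ M,
   i.e. to x - m for m ∈ M with m ⪯ x. *)

(* Fuel-based unfolding of the recursive P/N classification (misère play):
   x is a P-position iff it has an option and every option is an N-position
   (i.e. not a P-position). When 0 ∉ M each move strictly decreases psum,
   so fuel (psum x).+1 suffices. *)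
Fixpoint isP_fuel d (M : pos d -> Prop) (n : nat) (x : pos d) : Prop :=
  match n with
  | 0 => False
  | n'.+1 =>
      (exists m, M m /\ ple m x) /\
      (forall m, M m -> ple m x -> ~ isP_fuel M n' (psub x m))
  end.

(* P(M): empty if 0 ∈ M, otherwise the set of P-positions. *)
Definition Ppos d (M : pos d -> Prop) (x : pos d) : Prop :=
  ~ M (@pzero d) /\ isP_fuel M (psum x).+1 x.

Definition reflexive_game d (M : pos d -> Prop) : Prop :=
  forall x, M x <-> Ppos M x.

Definition terminal d (M : pos d -> Prop) (x : pos d) : Prop :=
  forall m, M m -> ~ ple m x.

Definition sumset d (A : pos d -> Prop) (x : pos d) : Prop :=
  exists a b, A a /\ A b /\ x = padd a b.

(* Main.v *)
Require Import Defs.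
From mathcomp Require Import all_boot.
From Stdlib Require Import Classical FunctionalExtensionality.
Set Implicit Arguments. Unset Strict Implicit.

Lemma psum_sub d (x m : pos d) : ple m x -> psum x = psum (psub x m) + psum m.
Proof.
move=> le; rewrite /psum -big_split /=; apply: eq_bigr => i _.
by rewrite /psub subnK.
Qed.

Lemma psum_pos d (m : pos d) : m <> @pzero d -> 0 < psum m.
Proof.
move=> hm; rewrite lt0n; apply/negP => h; apply: hm.
move: h; rewrite /psum sum_nat_eq0 => /forallP h.
apply: functional_extensionality => i; exact/eqP/(h i).
Qed.

Lemma psum_dec d (A : pos d -> Prop) (x m : pos d) :
  ~ A (@pzero d) -> A m -> ple m x -> psum (psub x m) < psum x.
Proof.
move=> h0 Am le; rewrite (psum_sub le) -[X in X < _]addn0 ltn_add2l.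
apply: psum_pos => e; by subst.
Qed.

Lemma fuel_eq d (A : pos d -> Prop) (h0 : ~ A (@pzero d)) n1 :
  forall n2 x, psum x < n1 -> psum x < n2 ->
  isP_fuel A n1 x <-> isP_fuel A n2 x.
Proof.
elim: n1 => [|n1 IH] [|n2] x //= l1 l2.
split=> -[h1 h2]; split=> // m Am le.
- have hd := psum_dec h0 Am le.
  rewrite -(IH n2) ?(leq_trans hd) //; exact: h2.
- have hd := psum_dec h0 Am le.
  rewrite (IH n2) ?(leq_trans hd) //; exact: h2.
Qed.

Lemma Ppos_char d (A : pos d -> Prop) (h0 : ~ A (@pzero d)) x :
  Ppos A x <-> (exists m, A m /\ ple m x) /\
                (forall m, A m -> ple m x -> ~ Ppos A (psub x m)).
Proof.
rewrite /Ppos /=; split.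
- move=> [_ [h1 h2]]; split=> // m Am le [_ hp]; apply: (h2 m Am le).
  have hd := psum_dec h0 Am le.
  by rewrite (fuel_eq h0 (n2 := (psum (psub x m)).+1)).
- move=> [h1 h2]; split=> //; split=> // m Am le hp; apply: (h2 m Am le).
  split=> //; have hd := psum_dec h0 Am le.
  by apply/(@fuel_eq d A h0 (psum x) _ (psub x m) hd (ltnSn _)).
Qed.

Lemma nosum d (A : pos d -> Prop) x :
  (forall m, A m -> ple m x -> ~ A (psub x m)) <-> ~ sumset A x.
Proof.
split.
- move=> h [a [b [Aa [Ab e]]]]; subst x; apply: (h a Aa).
  + by move=> i; rewrite /padd leq_addr.
  + have -> : psub (padd a b) a = b.
      by apply: functional_extensionality => i; rewrite /psub /padd addKn.
    done.
- move=> h m Am le Ax; apply: h; exists m, (psub x m); split=> //; split=> //.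
  by apply: functional_extensionality => i; rewrite /psub /padd subnKC.
Qed.

Lemma nterm d (A : pos d -> Prop) x :
  ~ terminal A x <-> exists m, A m /\ ple m x.
Proof.
split.
- move=> h; apply: NNPP => h'; apply: h => m Am le; apply: h'; by exists m.
- by move=> [m [Am le]] h; apply: (h m Am le).
Qed.

Theorem theorem4 (d : nat) (hd : 0 < d) (A : pos d -> Prop) :
  reflexive_game A <->
  (forall x : pos d, sumset A x <-> (~ A x /\ ~ terminal A x)).
Proof.
split.
- move=> R.
  have h0 : ~ A (@pzero d) by move=> h; have [] := (proj1 (R _)) h.
  have key : forall x, A x <-> (exists m, A m /\ ple m x) /\ ~ sumset A x.
    move=> x; rewrite R Ppos_char // -nosum.
    split=> -[h1 h2]; split=> // m Am le; first [rewrite R; exact: h2 | rewrite -R; exact: h2].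
  move=> x; split.
  + move=> hs; split.
    * by move=> /key [_]; apply.
    * case: hs => a [b [Aa [Ab ->]]]; apply/nterm; exists a; split=> //.
      by move=> i; rewrite /padd leq_addr.
  + move=> [nA /nterm nT]; apply: NNPP => ns; apply: nA; exact/key.
- move=> H.
  have h0 : ~ A (@pzero d).
    move=> h; have : sumset A (@pzero d).
      by exists (@pzero d), (@pzero d); split=> //; split=> //;
         apply: functional_extensionality.
    by move/H => [].
  have key : forall x, A x <-> (exists m, A m /\ ple m x) /\ ~ sumset A x.
    move=> x; split.
    + move=> Ax; split; first by exists x; split.
      by move/H => [].
    + move=> [/nterm nT ns]; apply: NNPP => nA; apply: ns; exact/H.
  suff : forall n x, psum x < n -> (A x <-> Ppos A x).
    by move=> h x; apply: (h (psum x).+1).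
  elim=> [|n IH] x // lx.
  rewrite key Ppos_char // -nosum.
  split=> -[h1 h2]; split=> // m Am le; have hdd := psum_dec h0 Am le;
    first [rewrite -IH; [exact: h2 | exact: leq_trans hdd _]
          | rewrite IH; [exact: h2 | exact: leq_trans hdd _]].
Qed.
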